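(* Let $n\ge 2$ and let $G\in\mathcal{G}_{2n}$ with $F(G)=n-1$. Then: (i) $G$ has no fixed double bond, i.e. $G-e$ has a perfect matching for every edge $e$ of $G$; (ii) the connectivity satisfies $\kappa(G)\geq n$. Moreover, if $G$ is minimal, then $G$ is $n$-regular and $\kappa(G)=\lambda(G)=n$, where $\lambda(G)$ is the edge connectivity.
   Context: All graphs are finite and simple. $\mathcal{G}_{2n}$ denotes the set of all graphs with $2n$ vertices that have a perfect matching. For a perfect matching $M$ of $G$, a forcing set of $M$ is a subset $S\subseteq M$ contained in no other perfect matching of $G$; $f(G,M)$ is the minimum size of a forcing set of $M$, and $F(G)$ is the maximum of $f(G,M)$ over all perfect matchings $M$ of $G$. A fixed double bond is an edge contained in every perfect matching. A graph $G\in\mathcal{G}_{2n}$ with $F(G)=n-1$ is called minimal if $F(G-e)\leq n-2$ for each edge $e$ of $G$. *)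

(* Defs.v *)
From mathcomp Require Import all_boot.
Set Implicit Arguments. Unset Strict Implicit. Unset Printing Implicit Defensive.

(* A finite simple graph with vertex type T (a finType) is given by its
   edge set E : {set {set T}}, every edge being a 2-element vertex set. *)
Section Graphs.
Variable T : finType.

Definition simple_graph (E : {set {set T}}) : Prop :=
  forall e, e \in E -> #|e| = 2.

Definition perfect_matching (E M : {set {set T}}) : bool :=
  (M \subset E) && [forall v : T, #|[set e in M | v \in e]| == 1].

Definition has_pm (E : {set {set T}}) : Prop := exists M, perfect_matching E M.

Definition forcing (E M S : {set {set T}}) : bool :=
  (S \subset M) &&
  [forall M' : {set {set T}}, (perfect_matching E M' && (S \subset M')) ==> (M' == M)].

(* f(G,M): minimum size of a forcing set of M (M itself is one). *)
Definition fnum (E M : {set {set T}}) : nat :=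
  \big[minn/#|M|]_(S : {set {set T}} | forcing E M S) #|S|.

Definition Fnum (E : {set {set T}}) : nat :=
  \max_(M : {set {set T}} | perfect_matching E M) fnum E M.

Definition fixed_double_bond (E : {set {set T}}) (e : {set T}) : Prop :=
  e \in E /\ forall M, perfect_matching E M -> e \in M.

Definition adj (E : {set {set T}}) (x y : T) : bool := [set x; y] \in E.

Definition connected_minus (E : {set {set T}}) (S : {set T}) : bool :=
  [forall x, forall y, (x \notin S) ==> (y \notin S) ==>
     connect [rel a b | (a \notin S) && (b \notin S) && adj E a b] x y].

Definition connected (E : {set {set T}}) : bool := connected_minus E set0.

Definition kappa (E : {set {set T}}) : nat :=
  \big[minn/#|T|]_(S : {set T} | ~~ connected_minus E S || (#|~: S| <= 1)) #|S|.

Definition lambda (E : {set {set T}}) : nat :=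
  \big[minn/#|E|]_(D : {set {set T}} | (D \subset E) && ~~ connected (E :\: D)) #|D|.

Definition deg (E : {set {set T}}) (v : T) : nat := #|[set e in E | v \in e]|.

Definition regular (E : {set {set T}}) (k : nat) : Prop := forall v, deg E v = k.

Definition minimal (n : nat) (E : {set {set T}}) : Prop :=
  Fnum E = n.-1 /\ forall e, e \in E -> Fnum (E :\ e) <= n - 2.

End Graphs.

(* Main.v *)
Require Import Defs.
From mathcomp Require Import all_boot zify.
Set Implicit Arguments. Unset Strict Implicit. Unset Printing Implicit Defensive.

Section Basic.
Variable T : finType.
Implicit Types (E M : {set {set T}}) (e f g h : {set T}).

Lemma pm_sub E M : perfect_matching E M -> M \subset E.
Proof. by case/andP. Qed.

Lemma pm_card1 E M v : perfect_matching E M -> #|[set e in M | v \in e]| = 1.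
Proof. by case/andP=> _ /forallP /(_ v) /eqP. Qed.

Lemma pm_cov E M v : perfect_matching E M -> exists2 e, e \in M & v \in e.
Proof.
move=> /(pm_card1 v) /eqP /cards1P [e He].
have : e \in [set e in M | v \in e] by rewrite He set11.
by rewrite inE => /andP[]; exists e.
Qed.

Lemma pm_uniq E M v e f : perfect_matching E M -> e \in M -> f \in M ->
  v \in e -> v \in f -> e = f.
Proof.
move=> /(pm_card1 v) /eqP /cards1P [x Hx] eM fM ve vf.
have : e \in [set e in M | v \in e] by rewrite inE eM ve.
have : f \in [set e in M | v \in e] by rewrite inE fM vf.
by rewrite Hx !inE => /eqP -> /eqP ->.
Qed.

Lemma pm_mono E E' M : perfect_matching E M -> M \subset E' -> perfect_matching E' M.
Proof. by case/andP=> _ H S; rewrite /perfect_matching S. Qed.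

Lemma two_set f x : #|f| = 2 -> x \in f -> exists y, y != x /\ y \in f /\ f = [set x; y].
Proof.
move=> /eqP /cards2P [a [b [ab ->]]]; rewrite !inE => /orP[] /eqP ->.
  by exists b; rewrite eq_sym ab !inE eqxx orbT.
by exists a; rewrite ab !inE eqxx setUC.
Qed.

Lemma sub2 f g : #|f| = 2 -> #|g| = 2 -> f \subset g -> f = g.
Proof. by move=> cf cg fg; apply/eqP; rewrite eqEcard fg cf cg. Qed.

Lemma pm_size E M e : simple_graph E -> perfect_matching E M -> e \in M -> #|e| = 2.
Proof. by move=> sE /pm_sub /subsetP H /H /sE. Qed.

Lemma ex2 f : #|f| = 2 -> exists x, x \in f.
Proof. by move=> cf; apply/card_gt0P; rewrite cf. Qed.

Lemma pm_in E M g (sE : simple_graph E) M' : perfect_matching E M -> perfect_matching E M' ->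
  g \in M -> (forall h, h \in M -> h != g -> h \in M') -> g \in M'.
Proof.
move=> pM pM' gM H.
have [x xg] := ex2 (pm_size sE pM gM).
have [h hM' xh] := pm_cov x pM'.
suff -> : g = h by [].
apply/esym/sub2; [exact: pm_size sE pM' hM'|exact: pm_size sE pM gM|].
apply/subsetP=> y yh.
have [k kM yk] := pm_cov y pM.
have [kg|kg] := eqVneq k g; first by rewrite -kg.
have hk : h = k by apply: (pm_uniq pM' hM' (H _ kM kg) yh yk).
by move: kg; rewrite -(pm_uniq pM gM kM xg (ltac:(by rewrite -hk))) eqxx.
Qed.

Lemma pm_eq E M M' (sE : simple_graph E) : perfect_matching E M -> perfect_matching E M' ->
  M \subset M' -> M' = M.
Proof.
move=> pM pM' /subsetP MM'; apply/setP=> h; apply/idP/idP; last exact: MM'.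
move=> hM'.
have [x xh] := ex2 (pm_size sE pM' hM').
have [k kM xk] := pm_cov x pM.
by rewrite (pm_uniq pM' hM' (MM' _ kM) xh xk).
Qed.

End Basic.

Lemma pm_card (T : finType) (E M : {set {set T}}) : simple_graph E -> perfect_matching E M ->
  #|T| = #|M| * 2.
Proof.
move=> sE pM.
have e1 : \sum_(v : T) \sum_(e in M) (v \in e : nat) = #|T|.
  rewrite -sum1_card; apply: eq_bigr => v _.
  rewrite -(pm_card1 v pM) -sum1_card.
  idtac.
  rewrite [RHS](eq_bigl (fun e => (e \in M) && (v \in e))); last by move=> e; rewrite inE.
  by rewrite [RHS]big_mkcondr /=; apply: eq_bigr => e _; case: (v \in e).
rewrite -e1 exchange_big /= -sum_nat_const; apply: eq_bigr => e eM.
rewrite -(pm_size sE pM eM) -sum1_card [RHS]big_mkcond /=.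
by apply: eq_bigr => v _; case: (v \in e).
Qed.

Lemma bigmin_le (I : eqType) (r : seq I) (P : pred I) (F : I -> nat) d i0 :
  i0 \in r -> P i0 -> \big[minn/d]_(i <- r | P i) F i <= F i0.
Proof.
elim: r => [//|a r IH]; rewrite inE big_cons => /orP[/eqP <-|ir] Pi.
  by rewrite Pi geq_minl.
case: (P a); last exact: IH.
by rewrite (leq_trans (geq_minr _ _)) ?IH.
Qed.

Lemma bigmin_ge (I : finType) (P : pred I) (F : I -> nat) d k :
  k <= d -> (forall i, P i -> k <= F i) -> k <= \big[minn/d]_(i | P i) F i.
Proof.
move=> kd H; apply: (big_ind (fun x => k <= x)) => // x y kx ky.
by rewrite leq_min kx ky.
Qed.

Lemma fnum_le (T : finType) (E M S : {set {set T}}) : forcing E M S -> fnum E M <= #|S|.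
Proof. by move=> fS; apply: bigmin_le => //; apply: mem_index_enum. Qed.

Lemma fnum_ge (T : finType) (E M : {set {set T}}) k : k <= #|M| ->
  (forall S, forcing E M S -> k <= #|S|) -> k <= fnum E M.
Proof. by move=> kM H; apply: bigmin_ge. Qed.

Section Main.
Variables (T : finType) (n : nat) (E : {set {set T}}).
Hypotheses (n2 : 2 <= n) (cT : #|T| = n.*2) (sE : simple_graph E).
Implicit Types (M S : {set {set T}}) (a b g h : {set T}).

Definition good M := perfect_matching E M /\ forall S, forcing E M S -> n.-1 <= #|S|.

Lemma cardM (E' : {set {set T}}) M : simple_graph E' -> perfect_matching E' M -> #|M| = n.
Proof.
move=> sE' pM; have := pm_card sE' pM; rewrite cT -muln2 => /eqP.
by rewrite eqn_pmul2r // => /eqP.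
Qed.

Lemma good_ex : has_pm E -> Fnum E = n.-1 -> exists M, good M.
Proof.
move=> [M0 pM0] FE.
case: (boolP [exists M, perfect_matching E M && (n.-1 <= fnum E M)]).
  case/existsP=> M /andP[pM le]; exists M; split=> // S fS.
  exact: leq_trans le (fnum_le fS).
rewrite negb_exists => /forallP H.
suff : Fnum E <= n.-1.-1 by rewrite FE; lia.
apply/bigmax_leqP => M pM; have := H M; rewrite pM /= -ltnNge.
lia.
Qed.

Lemma pair_sw M a b : good M -> a \in M -> b \in M -> a != b ->
  exists M', [/\ perfect_matching E M', (forall g, g \in M -> g != a -> g != b -> g \in M'),
     a \notin M' & b \notin M'].
Proof.
move=> [pM gM] aM bM ab.
set S := M :\ a :\ b.
have cS : #|S| = n - 2.
  have := cardsD1 a M; have := cardsD1 b (M :\ a).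
  rewrite (cardM sE pM) aM !inE eq_sym ab bM /= -/S; by move=> -> ->; rewrite addnA addKn.
have nf : ~~ forcing E M S.
  apply/negP => /gM; rewrite cS; lia.
have subS : S \subset M by apply/subsetP => g; rewrite !inE => /and3P[].
move: nf; rewrite /forcing subS /= => /forallPn [M'].
rewrite negb_imply => /andP[/andP[pM' SM'] neq].
have inS g : g \in M -> g != a -> g != b -> g \in M'.
  by move=> gM' ga gb; apply: (subsetP SM'); rewrite !inE ga gb gM'.
have key c d : c \in M -> d \in M -> c != d ->
   (forall g, g \in M -> g != c -> g != d -> g \in M') -> c \notin M'.
  move=> cM dM cd H; apply/negP => cM'.
  have dM' : d \in M'.
    apply: (pm_in sE pM pM' dM) => g gM' gd.
    by have [->|gc] := eqVneq g c; [|exact: H].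
  move: neq; rewrite (pm_eq sE pM pM') ?eqxx //.
  apply/subsetP => g gM'.
  by have [->|gc] := eqVneq g c; [|have [->|gd] := eqVneq g d; [|exact: H]].
exists M'; split => //.
  exact: (key a b aM bM ab inS).
apply: (key b a bM aM); first by rewrite eq_sym.
by move=> g gM' gb ga; exact: inS.
Qed.

Lemma CR M a b x : good M -> a \in M -> b \in M -> a != b -> x \in a ->
  exists2 y, y \in b & [set x; y] \in E.
Proof.
move=> gd aM bM ab xa.
have [M' [pM' inM' aM' bM']] := pair_sw gd aM bM ab.
have pM := gd.1.
have [h hM' xh] := pm_cov x pM'.
have hE : h \in E := subsetP (pm_sub pM') _ hM'.
have [y [yx [yh hxy]]] := two_set (sE hE) xh.
have [g gM yg] := pm_cov y pM.
have [gb|gb] := eqVneq g b; first by exists y; rewrite -?gb // -hxy.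
have [ga|ga] := eqVneq g a.
  have ha : h = a.
    apply: sub2; [exact: sE|exact: pm_size sE pM aM|].
    by rewrite hxy subUset !sub1set xa -ga yg.
  by move: aM'; rewrite -ha hM'.
have hg : h = g := pm_uniq pM' hM' (inM' _ gM ga gb) yh yg.
by move: ga; rewrite -(pm_uniq pM aM gM xa (ltac:(by rewrite -hg))) eqxx.
Qed.

Lemma avoid M e : good M -> e \in E -> exists M'', perfect_matching E M'' /\ e \notin M''.
Proof.
move=> gd eE; have pM := gd.1.
case: (boolP (e \in M)) => eM; last by exists M.
have : 0 < #|M :\ e| by move: (cardsD1 e M); rewrite eM (cardM sE pM); lia.
case/card_gt0P => b; rewrite !inE => /andP[be bM].
have [M' [pM' _ eM' _]] := pair_sw gd eM bM (ltac:(by rewrite eq_sym)).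
by exists M'.
Qed.

End Main.

Lemma PH (K L : finType) (A : {set K}) (R : K -> {set L}) (D : {set L}) :
  {in A &, forall i j, i != j -> [disjoint R i & R j]} -> #|D| < #|A| ->
  exists2 i, i \in A & [disjoint R i & D].
Proof.
move=> dis cD.
case: (boolP [exists i in A, [disjoint R i & D]]).
  by case/existsP => i /andP[]; exists i.
rewrite negb_exists => /forallP H.
have nz i : i \in A -> exists x, x \in R i :&: D.
  by move=> iA; apply/set0Pn; rewrite setI_eq0; move: (H i); rewrite iA.
pose f i := [pick x in R i :&: D].
have fS i : i \in A -> exists2 x, f i = Some x & x \in R i :&: D.
  move=> iA; rewrite /f; case: pickP => [x xi|no]; first by exists x.
  by have [x xi] := nz i iA; move: (no x); rewrite xi.
have inj : {in A &, injective f}.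
  move=> i j iA jA fij; apply/eqP; apply: contraTT isT => ij.
  have [x fx xi] := fS i iA; have [y fy yj] := fS j jA.
  move: fij; rewrite fx fy => -[xy]; subst y.
  move: xi yj; rewrite !inE => /andP[xi _] /andP[xj _].
  by rewrite (disjointFr (dis i j iA jA ij) xi) in xj.
have : #|[set f i | i in A]| <= #|[set Some x | x in D]|.
  apply: subset_leq_card; apply/subsetP => o /imsetP[i iA ->].
  have [x -> xi] := fS i iA; apply/imsetP; exists x => //.
  by move: xi; rewrite inE => /andP[].
rewrite card_in_imset // card_imset; last by move=> ? ? [].
by rewrite leqNgt cD.
Qed.

Lemma pm_disj (T : finType) (E M : {set {set T}}) c c' : perfect_matching E M -> c \in M -> c' \in M ->
  c != c' -> [disjoint c & c'].
Proof.
move=> pM cM c'M cc; rewrite -setI_eq0; apply/eqP/setP => x; rewrite !inE.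
apply/negP => /andP[xc xc']; by move: cc; rewrite (pm_uniq pM cM c'M xc xc') eqxx.
Qed.

Definition crel (T : finType) (E : {set {set T}}) (S : {set T}) :=
  [rel a b | (a \notin S) && (b \notin S) && adj E a b].

Lemma crel_sym (T : finType) (E : {set {set T}}) (S : {set T}) : connect_sym (crel E S).
Proof.
apply: sym_connect_sym => a b /=; rewrite /adj setUC.
by rewrite [(a \notin S) && _]andbC.
Qed.

Lemma conn_intro (T : finType) (E : {set {set T}}) (S : {set T}) :
  (forall x y, x \notin S -> y \notin S -> connect (crel E S) x y) -> connected_minus E S.
Proof.
move=> H; apply/forallP => x; apply/forallP => y; apply/implyP => xS; apply/implyP => yS.
exact: H.
Qed.

Section Kappa.
Variables (T : finType) (n : nat) (E : {set {set T}}).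
Hypotheses (n2 : 2 <= n) (cT : #|T| = n.*2) (sE : simple_graph E).
Implicit Types (M S : {set {set T}}) (a b g h : {set T}).

Lemma small_conn M (S : {set T}) : good n E M -> #|S| < n -> connected_minus E S.
Proof.
move=> gd cS; have pM := gd.1.
have [f fM dfS] : exists2 f, f \in M & [disjoint f & S].
  apply: (PH (R := id)); last by rewrite (cardM cT sE pM).
  by move=> c c' cM c'M; apply: (pm_disj pM).
have fS z : z \in f -> z \notin S by move=> zf; rewrite (disjointFr dfS zf).
have cf : #|f| = 2 := pm_size sE pM fM.
have inf y z : y \in f -> z \in f -> connect (crel E S) y z.
  move=> yf zf; have [<-|yz] := eqVneq y z; first exact: connect0.
  apply: connect1; rewrite /= !fS //= /adj.
  have -> : [set y; z] = f.
    apply: sub2 cf _; first by rewrite cards2 yz.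
    by rewrite subUset !sub1set yf zf.
  exact: subsetP (pm_sub pM) _ fM.
have tof x z : x \notin S -> z \in f -> connect (crel E S) x z.
  move=> xS zf; have [g gM xg] := pm_cov x pM.
  have [gf|gf] := eqVneq g f; first by apply: inf; rewrite // -gf.
  have [y yf xyE] := CR n2 cT sE gd gM fM gf xg.
  apply: connect_trans (inf y z yf zf); apply: connect1.
  by rewrite /= xS fS.
apply: conn_intro => x y xS yS.
have [z zf] := ex2 cf.
apply: connect_trans (tof x z xS zf) _.
by rewrite (crel_sym E S); apply: tof.
Qed.

Lemma kappa_ge M : good n E M -> n <= kappa E.
Proof.
move=> gd; apply: bigmin_ge; first by rewrite cT -addnn leq_addr.
move=> S HS; rewrite leqNgt; apply/negP => cS; move: HS.
rewrite (small_conn gd cS) /= leqNgt => /negP; apply.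
have := cardsC S; rewrite cT; lia.
Qed.
End Kappa.

Section Lam.
Variables (T : finType) (n : nat) (E : {set {set T}}).
Hypotheses (n2 : 2 <= n) (cT : #|T| = n.*2) (sE : simple_graph E).
Implicit Types (M D : {set {set T}}) (a b c d g h f : {set T}).

Definition cr g (x : T) := odflt x [pick y in g | [set x; y] \in E].

Lemma crP M c g x : good n E M -> c \in M -> g \in M -> c != g -> x \in c ->
  cr g x \in g /\ [set x; cr g x] \in E.
Proof.
move=> gd cM gM cg xc; rewrite /cr; case: pickP => [y /andP[]//|no].
have [y yg yE] := CR n2 cT sE gd cM gM cg xc.
by move: (no y); rewrite yg yE.
Qed.

Lemma rdisj M b g g' f w w' : perfect_matching E M -> b \in M -> g \in M -> g' \in M ->
  f \subset b :|: g -> f \subset b :|: g' -> w \in f -> w \in g -> w' \in f -> w' \in g' -> g = g'.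
Proof.
move=> pM bM gM g'M /subsetP s1 /subsetP s2 wf wg w'f w'g'.
have := s2 _ wf; rewrite inE => /orP[wb|wg']; last exact: pm_uniq pM gM g'M wg wg'.
have := s1 _ w'f; rewrite inE => /orP[w'b|w'g]; last exact: pm_uniq pM gM g'M w'g w'g'.
by rewrite (pm_uniq pM gM bM wg wb) (pm_uniq pM g'M bM w'g' w'b).
Qed.

Lemma deg_ge M v : good n E M -> n <= deg E v.
Proof.
move=> gd; have pM := gd.1; have [a aM va] := pm_cov v pM.
pose psi g := if g == a then a else [set v; cr g v].
have prop g : g \in M -> psi g \subset a :|: g /\ exists2 w, w \in psi g & w \in g.
  move=> gM; rewrite /psi; case: eqP => [->|/eqP ga].
    by split; [exact: subsetUl|exists v].
  have [cg cE] := crP gd aM gM (ltac:(by rewrite eq_sym)) va.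
  split; last by exists (cr g v); rewrite // !inE eqxx orbT.
  by rewrite subUset !sub1set !inE va cg orbT.
have inj : {in M &, injective psi}.
  move=> g g' gM g'M Heq.
  have [s1 [w wf wg]] := prop g gM; have [s2 [w' w'f w'g]] := prop g' g'M.
  rewrite Heq in s1 wf.
  exact: rdisj pM aM gM g'M s1 s2 wf wg w'f w'g.
rewrite -(cardM cT sE pM) -(card_in_imset inj) /deg.
apply: subset_leq_card; apply/subsetP => e /imsetP[g gM ->].
rewrite inE /psi; case: eqP => [_|/eqP ga]; first by rewrite va (subsetP (pm_sub pM)).
have [cg cE] := crP gd aM gM (ltac:(by rewrite eq_sym)) va.
by rewrite cE !inE eqxx.
Qed.

Lemma estep D (a b : T) : [set a; b] \in E -> [set a; b] \notin D ->
  connect (crel (E :\: D) set0) a b.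
Proof. by move=> aE aD; apply: connect1; rewrite /= !inE /adj !inE aE aD. Qed.


Lemma step1 M D c (u u' : T) : good n E M -> #|D| < n -> c \in M -> u \in c -> u' \in c ->
  connect (crel (E :\: D) set0) u u'.
Proof.
move=> gd cD cM uc u'c; have pM := gd.1.
have [<-|uu] := eqVneq u u'; first exact: connect0.
have cc : #|c| = 2 := pm_size sE pM cM.
have hc : c = [set u; u'].
  by apply/esym/sub2; rewrite ?cards2 ?uu // subUset !sub1set uc u'c.
pose R g := if g == c then [set c] else [set [set u; cr g u]; [set u'; cr g u']; g].
have prop g f : g \in M -> f \in R g -> f \subset c :|: g /\ exists2 w, w \in f & w \in g.
  move=> gM; rewrite /R; case: eqP => [->|/eqP gc].
    by rewrite inE => /eqP ->; split; [exact: subsetUl|exists u].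
  have [cg1 cE1] := crP gd cM gM (ltac:(by rewrite eq_sym)) uc.
  have [cg2 cE2] := crP gd cM gM (ltac:(by rewrite eq_sym)) u'c.
  rewrite !inE => /orP[/orP[]|] /eqP ->.
  - split; last by exists (cr g u); rewrite // !inE eqxx orbT.
    by rewrite subUset !sub1set !inE uc cg1 orbT.
  - split; last by exists (cr g u'); rewrite // !inE eqxx orbT.
    by rewrite subUset !sub1set !inE u'c cg2 orbT.
  - split; first exact: subsetUr.
    by have [w wg] := ex2 (pm_size sE pM gM); exists w.
have [g gM dg] : exists2 g, g \in M & [disjoint R g & D].
  apply: PH; last by rewrite (cardM cT sE pM).
  move=> g g' gM g'M gg; rewrite -setI_eq0; apply/eqP/setP => f; rewrite !inE.
  apply/negP => /andP[f1 f2].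
  have [s1 [w wf wg]] := prop g f gM f1; have [s2 [w' w'f w'g]] := prop g' f g'M f2.
  by move: gg; rewrite (rdisj pM cM gM g'M s1 s2 wf wg w'f w'g) eqxx.
have nD f : f \in R g -> f \notin D by move=> fR; rewrite (disjointFr dg fR).
move: nD; rewrite /R; case: eqP => [gc|/eqP gc] nD.
  by apply: estep; rewrite -hc ?nD ?set11 // (subsetP (pm_sub pM)).
have [cg1 cE1] := crP gd cM gM (ltac:(by rewrite eq_sym)) uc.
have [cg2 cE2] := crP gd cM gM (ltac:(by rewrite eq_sym)) u'c.
apply: (connect_trans (estep cE1 _)); first by rewrite nD // !inE eqxx.
have h2 : connect (crel (E :\: D) set0) (cr g u') u'.
  rewrite (crel_sym (E :\: D) set0); apply: (estep cE2).
  by rewrite nD // !inE eqxx orbT.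
apply: (connect_trans _ h2).
have [<-|ww] := eqVneq (cr g u) (cr g u'); first exact: connect0.
have hg : [set cr g u; cr g u'] = g.
  by apply: sub2; rewrite ?cards2 ?ww ?(pm_size sE pM gM) // subUset !sub1set cg1 cg2.
apply: estep; rewrite hg; first by rewrite (subsetP (pm_sub pM)).
by rewrite nD // !inE eqxx !orbT.
Qed.


Lemma step2 M D c d (u v : T) : good n E M -> #|D| < n -> c \in M -> d \in M -> c != d ->
  u \in c -> v \in d -> connect (crel (E :\: D) set0) u v.
Proof.
move=> gd cD cM dM cd uc vd; have pM := gd.1.
have [u2 [u2u [u2c hc]]] := two_set (pm_size sE pM cM) uc.
have [cd1 cdE1] := crP gd cM dM cd uc.
have [cd2 cdE2] := crP gd cM dM cd u2c.
have dcd : [disjoint c & d] := pm_disj pM cM dM cd.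
pose R g := if g == c then [set [set u; cr d u]] else if g == d then [set [set u2; cr d u2]]
   else [set [set u; cr g u]; [set cr g u; cr d (cr g u)]].
have prop g f : g \in M -> f \in R g -> f \subset (c :|: d) :|: g /\ exists2 w, w \in f & w \in g.
  move=> gM; rewrite /R; case: eqP => [->|/eqP gc].
    rewrite inE => /eqP ->; split; last by exists u; rewrite ?inE ?eqxx.
    by rewrite subUset !sub1set !inE uc cd1 !orbT.
  case: eqP => [->|/eqP gd'].
    rewrite inE => /eqP ->; split; last by exists (cr d u2); rewrite ?inE ?eqxx ?orbT.
    by rewrite subUset !sub1set !inE u2c cd2 !orbT.
  have [cg1 cE1] := crP gd cM gM (ltac:(by rewrite eq_sym)) uc.
  have [cg2 cE2] := crP gd gM dM gd' cg1.
  rewrite !inE => /orP[] /eqP ->.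
  - split; last by exists (cr g u); rewrite // !inE eqxx orbT.
    by rewrite subUset !sub1set !inE uc cg1 !orbT.
  - split; last by exists (cr g u); rewrite // !inE eqxx.
    by rewrite subUset !sub1set !inE cg1 cg2 !orbT.
have neq : [set u; cr d u] != [set u2; cr d u2].
  apply/negP => /eqP e; have : u2 \in [set u; cr d u] by rewrite e !inE eqxx.
  rewrite !inE (negbTE u2u) /= => /eqP e2.
  by move: (disjointFr dcd u2c); rewrite e2 cd1.
have inB g g' f : g \in M -> g' \in M -> g != g' -> f \in R g -> f \in R g' -> (g == c) || (g == d).
  move=> gM g'M gg f1 f2.
  have [s1 [w wf wg]] := prop g f gM f1; have [s2 _] := prop g' f g'M f2.
  have := subsetP s2 w wf; rewrite !inE => /orP[/orP[wc|wd']|wg'].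
  - by rewrite (pm_uniq pM gM cM wg wc) eqxx.
  - by rewrite (pm_uniq pM gM dM wg wd') eqxx orbT.
  - by move: gg; rewrite (pm_uniq pM gM g'M wg wg') eqxx.
have [g gM dg] : exists2 g, g \in M & [disjoint R g & D].
  apply: PH; last by rewrite (cardM cT sE pM).
  move=> g g' gM g'M gg; rewrite -setI_eq0; apply/eqP/setP => f; rewrite !inE.
  apply/negP => /andP[f1 f2].
  have h1 := inB g g' f gM g'M gg f1 f2.
  have h2 := inB g' g f g'M gM (ltac:(by rewrite eq_sym)) f2 f1.
  have dc : (d == c) = false by rewrite eq_sym (negbTE cd).
  move: f1 f2 gg; rewrite /R.
  case/orP: h1 => /eqP ->; case/orP: h2 => /eqP ->; rewrite ?eqxx ?dc //= !inE.
    by move=> /eqP -> /eqP e; rewrite e eqxx in neq.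
  by move=> /eqP -> /eqP e; rewrite e eqxx in neq.
have nD f : f \in R g -> f \notin D by move=> fR; rewrite (disjointFr dg fR).
have s1d y : y \in d -> connect (crel (E :\: D) set0) y v.
  by move=> yd; apply: step1 gd cD dM yd vd.
move: nD; rewrite /R; case: eqP => [gc|/eqP gc] nD.
  apply: connect_trans (s1d _ cd1); apply: (estep cdE1).
  by rewrite nD ?inE.
have [gd'|gd'] := eqVneq g d.
  move: nD; rewrite gd' eqxx => nD.
  apply: connect_trans (step1 gd cD cM uc u2c) _.
  apply: connect_trans (s1d _ cd2); apply: (estep cdE2).
  by rewrite nD ?inE.
move: nD; rewrite (negbTE gd') => nD.
have [cg1 cE1] := crP gd cM gM (ltac:(by rewrite eq_sym)) uc.
have [cg2 cE2] := crP gd gM dM gd' cg1.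
apply: connect_trans (estep cE1 _) _; first by rewrite nD // !inE eqxx.
apply: connect_trans (s1d _ cg2); apply: (estep cE2).
by rewrite nD // !inE eqxx orbT.
Qed.

Lemma lam_conn M D : good n E M -> #|D| < n -> connected (E :\: D).
Proof.
move=> gd cD; have pM := gd.1; apply: conn_intro => x y _ _.
have [c cM xc] := pm_cov x pM; have [d dM yd] := pm_cov y pM.
have [ecd|cd] := eqVneq c d; first by rewrite -ecd in yd; exact: step1 gd cD cM xc yd.
exact: step2 gd cD cM dM cd xc yd.
Qed.

Lemma lambda_ge M : good n E M -> n <= lambda E.
Proof.
move=> gd; apply: bigmin_ge.
  have [v _] : exists v : T, v \in T by apply/card_gt0P; rewrite cT; lia.
  apply: leq_trans (deg_ge v gd) _; apply: subset_leq_card.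
  by apply/subsetP => e; rewrite inE => /andP[].
move=> D /andP[_ nc]; rewrite leqNgt; apply/negP => cD.
by rewrite (lam_conn gd cD) in nc.
Qed.

End Lam.

Lemma isolated (T : finType) (r : rel T) v y : (forall a, ~~ r v a) -> connect r v y -> y = v.
Proof.
move=> H /connectP [[|a p] /= pth ->] //.
by move: pth => /andP[rva _]; move: (H a); rewrite rva.
Qed.

Section Min.
Variables (T : finType) (n : nat) (E : {set {set T}}) (M : {set {set T}}).
Hypotheses (n2 : 2 <= n) (cT : #|T| = n.*2) (sE : simple_graph E) (gd : good n E M).
Hypothesis minE : forall e, e \in E -> Fnum (E :\ e) <= n - 2.
Implicit Types (D : {set {set T}}) (a b c d g h f e : {set T}).

Let pM := gd.1.

Definition W (P : {set {set T}}) := odflt set0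
  [pick M' | perfect_matching E M' && (M :\: P \subset M') && [disjoint P & M']].

Lemma WP a b : a \in M -> b \in M -> a != b ->
  [/\ perfect_matching E (W [set a; b]), M :\: [set a; b] \subset W [set a; b]
    & [disjoint [set a; b] & W [set a; b]]].
Proof.
move=> aM bM ab; rewrite /W; case: pickP => [M' /andP[/andP[]]//|no].
have [M' [pM' inM' aM' bM']] := pair_sw n2 cT sE gd aM bM ab.
move: (no M'); rewrite pM' /=.
have -> : M :\: [set a; b] \subset M'.
  by apply/subsetP => g; rewrite !inE negb_or => /andP[/andP[ga gb] gM]; apply: inM'.
suff -> : [disjoint [set a; b] & M'] by [].
rewrite -setI_eq0; apply/eqP/setP => g; rewrite !inE.
apply/negP => /andP[/orP[]/eqP-> H].
  by rewrite H in aM'.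
by rewrite H in bM'.
Qed.


Lemma covered e : e \in E -> e \notin M ->
  exists a, exists b, [/\ a \in M, b \in M, a != b & e \in W [set a; b]].
Proof.
move=> eE eM.
case: (boolP [exists a, exists b, [&& a \in M, b \in M, a != b & e \in W [set a; b]]]).
  by case/existsP => a /existsP [b /and4P[]]; exists a, b.
rewrite negb_exists => /forallP H.
have H' a b : a \in M -> b \in M -> a != b -> e \notin W [set a; b].
  by move=> aM bM ab; move: (H a) => /existsPn /(_ b); rewrite aM bM ab.
have cM := cardM cT sE pM.
have pMe : perfect_matching (E :\ e) M.
  apply: pm_mono pM _; apply/subsetP => g gM; rewrite !inE (subsetP (pm_sub pM)) // andbT.
  by apply: contraNneq eM => <-.
have : n.-1 <= fnum (E :\ e) M.
  apply: fnum_ge; first by rewrite cM leq_pred.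
  move=> S fS; rewrite leqNgt; apply/negP => cS.
  move: (fS); rewrite /forcing => /andP[SM /forallP FS].
  have : 1 < #|M :\: S|.
    rewrite cardsD (setIidPr SM) cM; lia.
  case/card_gt1P => a [b [/setDP[aM aS] /setDP[bM bS] ab]].
  have [pW sW dW] := WP aM bM ab.
  move: (FS (W [set a; b])); rewrite (pm_mono pW) /=; last first.
    apply/subsetP => g gW; rewrite !inE (subsetP (pm_sub pW)) // andbT.
    by apply: contraNneq (H' a b aM bM ab) => <-.
  have -> : S \subset W [set a; b].
    apply/subsetP => s sS; apply: (subsetP sW); rewrite !inE (subsetP SM) // andbT.
    by apply/negP => /orP[]/eqP es; [move: aS|move: bS]; rewrite -es sS.
  move=> /eqP WM.
  have aW : a \in W [set a; b] by rewrite WM.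
  by move: (disjointFl dW aW); rewrite !inE eqxx.
move=> le; have h := leq_trans le (leq_bigmax_cond _ pMe).
have := leq_trans h (minE eE); lia.
Qed.


Lemma Wsub a b f (y : T) : a \in M -> b \in M -> a != b -> f \in W [set a; b] -> f \notin M ->
  y \in f -> y \in a :|: b.
Proof.
move=> aM bM ab fW fM yf.
have [pW sW _] := WP aM bM ab.
have [g gM yg] := pm_cov y pM.
case: (boolP (g \in [set a; b])) => [|gP].
  by rewrite !inE => /orP[]/eqP <-; rewrite yg ?orbT.
have gW : g \in W [set a; b] by apply: (subsetP sW); rewrite inE gP.
by move: fM; rewrite (pm_uniq pW fW gW yf yg) gM.
Qed.

Lemma pair_eq c d a g : c != d -> a \in [set c; d] -> g \in [set c; d] -> a != g ->
  [set c; d] = [set a; g].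
Proof.
move=> cd; rewrite !inE => /orP[]/eqP-> /orP[]/eqP->; rewrite ?eqxx //.
by rewrite setUC.
Qed.

Definition other (v : T) f := odflt v [pick w in f :\ v].
Definition mE (w : T) := odflt set0 [pick g in M | w \in g].

Lemma mEP w : mE w \in M /\ w \in mE w.
Proof.
rewrite /mE; case: pickP => [g /andP[]//|no].
have [g gM wg] := pm_cov w pM; by move: (no g); rewrite gM wg.
Qed.

Lemma otherP v f : f \in E -> v \in f -> other v f != v /\ f = [set v; other v f].
Proof.
move=> fE vf; have [w [wv [wf fe]]] := two_set (sE fE) vf.
rewrite /other; case: pickP => [x|no]; last by move: (no w); rewrite !inE wv wf.
rewrite fe !inE => /andP[xv /orP[]/eqP xe]; first by rewrite xe eqxx in xv.
by rewrite xe.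
Qed.

Lemma deg_le v : deg E v <= n.
Proof.
have [a aM va] := pm_cov v pM.
pose phi f := mE (other v f).
have inj : {in [set f in E | v \in f] &, injective phi}.
  move=> f f'; rewrite !inE => /andP[fE vf] /andP[f'E vf'] Heq.
  have [ov fe] := otherP fE vf; have [ov' fe'] := otherP f'E vf'.
  set w := other v f in ov fe Heq; set w' := other v f' in ov' fe' Heq.
  rewrite /phi -/w -/w' in Heq.
  have [gM wg] := mEP w; have [_ w'g] := mEP w'; rewrite -Heq in w'g.
  set g := mE w in gM wg w'g Heq.
  have [ga|ga] := eqVneq g a.
    have fa : forall w0, w0 \in g -> w0 != v -> [set v; w0] = a.
      move=> w0 w0g w0v; apply: sub2; first by rewrite cards2 eq_sym w0v.
        exact: (pm_size sE pM aM).
      by rewrite subUset !sub1set va -ga w0g.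
    by rewrite fe fe' !fa.
  have notM f0 w0 : f0 = [set v; w0] -> w0 \in g -> f0 \notin M.
    move=> e0 w0g; apply/negP => f0M.
    have vf0 : v \in f0 by rewrite e0 !inE eqxx.
    have f0a := pm_uniq pM f0M aM vf0 va.
    have w0a : w0 \in a by rewrite -f0a e0 !inE eqxx orbT.
    by move: ga; rewrite (pm_uniq pM gM aM w0g w0a) eqxx.
  have inWag f0 w0 : f0 \in E -> f0 = [set v; w0] -> w0 \in g -> f0 \in W [set a; g].
    move=> f0E e0 w0g.
    have [c [d [cM dM cd f0W]]] := covered f0E (notM f0 w0 e0 w0g).
    have f0M := notM f0 w0 e0 w0g.
    have vcd := @Wsub c d f0 v cM dM cd f0W f0M (ltac:(by rewrite e0 !inE eqxx)).
    have wcd := @Wsub c d f0 w0 cM dM cd f0W f0M (ltac:(by rewrite e0 !inE eqxx orbT)).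
    have acd : a \in [set c; d].
      move: vcd; rewrite !inE => /orP[] vx.
        by rewrite (pm_uniq pM aM cM va vx) eqxx.
      by rewrite (pm_uniq pM aM dM va vx) eqxx orbT.
    have gcd : g \in [set c; d].
      move: wcd; rewrite !inE => /orP[] vx.
        by rewrite (pm_uniq pM gM cM w0g vx) eqxx.
      by rewrite (pm_uniq pM gM dM w0g vx) eqxx orbT.
    by rewrite -(pair_eq cd acd gcd (ltac:(by rewrite eq_sym))).
  have [pW _ _] := WP aM gM (ltac:(by rewrite eq_sym)).
  apply: (@pm_uniq _ _ _ v _ _ pW (inWag f w fE fe wg) (inWag f' w' f'E fe' w'g)).
    by rewrite fe !inE eqxx.
  by rewrite fe' !inE eqxx.
rewrite /deg -(card_in_imset inj) -(cardM cT sE pM); apply: subset_leq_card.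
by apply/subsetP => g /imsetP[f _ ->]; rewrite /phi; case: (mEP (other v f)).
Qed.

End Min.

Section Up.
Variables (T : finType) (n : nat) (E : {set {set T}}).
Hypotheses (n2 : 2 <= n) (cT : #|T| = n.*2) (sE : simple_graph E) (rE : regular E n).

Lemma someT : exists v : T, v \in T.
Proof. by apply/card_gt0P; rewrite cT; lia. Qed.

Lemma kappa_le : kappa E <= n.
Proof.
have [v _] := someT.
pose S := [set w | [set v; w] \in E].
have vS : v \notin S.
  by rewrite inE setUid; apply/negP => /sE; rewrite cards1.
have cS : #|S| <= n.
  rewrite -(rE v) /deg.
  have inj : {in S &, injective (fun w => [set v; w])}.
    move=> w w' wS w'S e.
    have : w' \in [set v; w] by rewrite e !inE eqxx orbT.
    rewrite !inE => /orP[]/eqP e'; last by rewrite e'.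
    by rewrite -e' w'S in vS.
  rewrite -(card_in_imset inj); apply: subset_leq_card.
  apply/subsetP => e /imsetP[w wS ->]; rewrite !inE eqxx andbT.
  by move: wS; rewrite inE.
have [y yS] : exists y, y \in ~: (v |: S).
  apply/card_gt0P; have := cardsC (v |: S); rewrite cardsU1 vS cT; lia.
apply: leq_trans _ cS; apply: bigmin_le; first exact: mem_index_enum.
apply/orP; left; apply/negP => /forallP /(_ v) /forallP /(_ y).
rewrite vS /=; move: yS; rewrite !inE negb_or => /andP[yv ->] /= /isolated e.
suff : y = v by move=> yv'; rewrite yv' eqxx in yv.
apply: e => a /=; rewrite vS /=; apply/negP => /andP[aS].
by rewrite /adj => vaE; move: aS; rewrite inE vaE.
Qed.

Lemma lambda_le : lambda E <= n.
Proof.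
have [v _] := someT.
pose D := [set e in E | v \in e].
have [y yv] : exists y, y \in [set~ v].
  apply/card_gt0P; rewrite cardsC1 cT; lia.
rewrite -(rE v) /deg -/D; apply: bigmin_le; first exact: mem_index_enum.
rewrite /=; apply/andP; split.
  by apply/subsetP => e; rewrite inE => /andP[].
apply/negP => /forallP /(_ v) /forallP /(_ y). rewrite !inE /=.
move=> /isolated e.
suff : y = v by move=> yv'; move: yv; rewrite yv' !inE eqxx.
apply: e => a /=; rewrite /adj !inE eqxx /=.
by case: ([set v; a] \in E).
Qed.

End Up.
Unset Implicit Arguments.

Theorem lemma2p3 (T : finType) (n : nat) (E : {set {set T}}) :
  2 <= n -> #|T| = n.*2 -> simple_graph E -> has_pm E -> Fnum E = n.-1 ->
  [/\ (forall e, ~ fixed_double_bond E e),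
      (forall e, e \in E -> has_pm (E :\ e)),
      n <= kappa E &
      (minimal n E -> regular E n /\ kappa E = n /\ lambda E = n)].
Proof.
move=> n2 cT sE hpm FE.
have [M gd] := good_ex n2 cT hpm FE.
split.
- move=> e [eE all].
  have [M'' [pM'' eM'']] := avoid n2 cT sE gd eE.
  by move: eM''; rewrite all.
- move=> e eE; have [M'' [pM'' eM'']] := avoid n2 cT sE gd eE.
  exists M''; apply: (pm_mono pM''); apply/subsetP => g gM.
  rewrite !inE (subsetP (pm_sub pM'')) // andbT.
  by apply: contraNneq eM'' => <-.
- exact: (kappa_ge n2 cT sE gd).
move=> [_ minE].
have reg : regular E n.
  by move=> v; apply/anti_leq; rewrite (deg_le n2 cT sE gd minE v) (deg_ge n2 cT sE v gd).
split=> //; split; apply/anti_leq.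
  by rewrite (kappa_le n2 cT sE reg) (kappa_ge n2 cT sE gd).
by rewrite (lambda_le n2 cT reg) (lambda_ge n2 cT sE gd).
Qed.
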